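(* Let $\lambda\in\overline{\mathrm{Pr}}_k$ and $\mu\in W\cdot\lambda$. Then $\mu\in\overline{\mathrm{Pr}}_k$ if and only if $\mu=w^{-1}\cdot\lambda$ for some $w\in W^\lambda$, where $W^\lambda=\{w\in W:\Delta_+\cap w(\Delta_-)\subset\Delta_+\setminus\Delta(\lambda)\}$ and $\Delta(\lambda)=\{\alpha\in\Delta:\langle\lambda+\rho,\alpha^\vee\rangle\in\mathbb Z\}$.
   Context: Let $\mathfrak g=\mathfrak{sl}_{n+1}(\mathbb C)$, $n\ge1$, $\mathfrak h$ the traceless diagonal matrices, $\Delta=\{\varepsilon_i-\varepsilon_j:i\neq j\}$, $\Delta_+=\{\varepsilon_i-\varepsilon_j:i<j\}$, $\Delta_-=-\Delta_+$, $\alpha_i=\varepsilon_i-\varepsilon_{i+1}$; $(\cdot,\cdot)$ the invariant form on $\mathfrak h^*$ with $(\alpha,\alpha)=2$ for roots, $\langle\mu,\alpha^\vee\rangle=(\mu,\alpha)$; $\omega_i$ fundamental weights, $P^\vee=\bigoplus\mathbb Z\omega_i$, $\rho=\sum\omega_i$; $W$ the Weyl group, $w\cdot\mu=w(\mu+\rho)-\rho$. Fix $k\in\mathbb Q$ with $k+n+1=p/q$, $p,q\in\mathbb N$ coprime, $p\ge n+1$. $\overline{\mathrm{Pr}}_{k,\mathbb Z}=\{\sum\lambda_i\omega_i:\lambda_i\in\mathbb N_0,\sum\lambda_i\le p-n-1\}$. For $w\in W,\eta\in P^\vee$, $C(w,\eta)$ means: for all $\alpha\in\Delta_+$, $0\le(\eta,\alpha)\le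 q-1$ if $w(\alpha)\in\Delta_+$ and $1\le(\eta,\alpha)\le q$ if $w(\alpha)\in\Delta_-$. The admissible weights of level $k$: $\overline{\mathrm{Pr}}_k=\{w\cdot(\mu-\tfrac pq\eta):\mu\in\overline{\mathrm{Pr}}_{k,\mathbb Z},w\in W,\eta\in P^\vee,C(w,\eta)\}$. *)

(* Defs.v *)
(* Weights of sl_{n+1} are encoded by their epsilon-coordinates:
   a weight mu in h^* is the traceless vector (mu_0,...,mu_n) in Q^{n+1},
   mu = sum_i mu_i eps_i, so that (mu, eps_i - eps_j) = mu_i - mu_j.
   The Weyl group is the symmetric group 'S_(n+1) permuting the eps_i. *)
From HB Require Import structures.
From mathcomp Require Import all_boot all_order all_algebra.
From mathcomp Require Import fingroup perm.
Set Implicit Arguments. Unset Strict Implicit. Unset Printing Implicit Defensive.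
Import Order.TTheory GRing.Theory Num.Theory.
Local Open Scope ring_scope.




Notation wt n := {ffun 'I_n.+1 -> rat}.

Definition traceless {n : nat} (x : wt n) : Prop := \sum_(i < n.+1) x i = 0.

(* (mu, eps_i - eps_j) = <mu, (eps_i - eps_j)^vee> *)
Definition pairing {n : nat} (x : wt n) (i j : 'I_n.+1) : rat := x i - x j.

(* roots eps_i - eps_j (i <> j) are encoded by ordered pairs (i,j) *)
Definition is_root {n : nat} (a : 'I_n.+1 * 'I_n.+1) : bool := a.1 != a.2.
Definition pos_root {n : nat} (a : 'I_n.+1 * 'I_n.+1) : bool := (a.1 < a.2)%N.
Definition neg_root {n : nat} (a : 'I_n.+1 * 'I_n.+1) : bool := (a.2 < a.1)%N.

(* rho = sum of fundamental weights: rho_i = n/2 - i *)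
Definition rho (n : nat) : wt n := [ffun i : 'I_n.+1 => (n%:R / 2%:R) - (i : nat)%:R].

(* w(eps_j) = eps_(w j) *)
Definition wact {n : nat} (w : {perm 'I_n.+1}) (x : wt n) : wt n := [ffun i => x ((w^-1)%g i)].
Definition root_act {n : nat} (w : {perm 'I_n.+1}) (a : 'I_n.+1 * 'I_n.+1) :=
  (w a.1, w a.2).

Definition dot {n : nat} (w : {perm 'I_n.+1}) (x : wt n) : wt n := wact w (x + rho n) - rho n.

(* P^vee = sum Z omega_i : traceless, integral pairing with simple coroots *)
Definition in_Pvee {n : nat} (x : wt n) : Prop :=
  traceless x /\ forall i : 'I_n, pairing x (widen_ord (leqnSn n) i) (lift ord0 i) \is a Num.int.

(* bar Pr_{k,Z} with k + n + 1 = p/q *)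
Definition PrZ {n : nat} (p : nat) (x : wt n) : Prop :=
  traceless x /\
  (forall i : 'I_n, pairing x (widen_ord (leqnSn n) i) (lift ord0 i) \is a Num.nat) /\
  \sum_(i < n) pairing x (widen_ord (leqnSn n) i) (lift ord0 i) <= (p%:R - n%:R - 1).

Definition Ccond {n : nat} (q : nat) (w : {perm 'I_n.+1}) (eta : wt n) : Prop :=
  forall a, pos_root a ->
    (pos_root (root_act w a) -> 0 <= pairing eta a.1 a.2 <= q%:R - 1) /\
    (neg_root (root_act w a) -> 1 <= pairing eta a.1 a.2 <= q%:R).

Definition Pr {n : nat} (p q : nat) (lam : wt n) : Prop :=
  exists (mu : wt n) (w : {perm 'I_n.+1}) (eta : wt n),
    [/\ PrZ p mu, in_Pvee eta, Ccond q w eta &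
        lam = dot w [ffun i => mu i - (p%:R / q%:R) * eta i]].

Definition Delta_int {n : nat} (lam : wt n) (a : 'I_n.+1 * 'I_n.+1) : Prop :=
  is_root a /\ pairing (lam + rho n) a.1 a.2 \is a Num.int.

Definition Wlam {n : nat} (lam : wt n) (w : {perm 'I_n.+1}) : Prop :=
  forall a, pos_root a -> (exists2 b, neg_root b & root_act w b = a) ->
    pos_root a /\ ~ Delta_int lam a.

(* Main.v *)
Require Import Defs.
From HB Require Import structures.
From mathcomp Require Import all_boot all_order all_algebra.
From mathcomp Require Import fingroup perm.
From mathcomp Require Import zify ring lra.
Import Order.TTheory GRing.Theory Num.Theory.
Local Open Scope ring_scope.

Lemma dvd_bound (a q : int) : (q %| a)%Z -> 0 < q -> 0 <= a <= q -> a = 0 \/ a = q.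
Proof. move=> /dvdzP [k ->] H1 /andP[H2 H3].
have [hk|hk] := lerP k 0.
  left. have : k * q <= 0 by rewrite pmulr_lle0. lia.
right. have : q <= k * q by rewrite ler_pMl. lia.
Qed.

Lemma qdiv (p q : nat) (E : rat) : (0<q)%N -> coprime p q -> E \is a Num.int ->
  (p%:R / q%:R * E) \is a Num.int -> 0 <= E <= q%:R -> E = 0 \/ E = q%:R.
Proof.
move=> q0 cpq /intrP [e ->] /intrP [z hz].
have qn0 : (q%:R : rat) != 0 by rewrite pnatr_eq0 -lt0n.
have h : ((p%:Z * e)%:~R : rat) = (q%:Z * z)%:~R.
  by rewrite !intrM -hz !pmulrn; field.
move/intr_inj: h => h.
have dv : (q%:Z %| e)%Z.
  rewrite -(@Gauss_dvdzr _ p%:Z); last by rewrite coprimezE /= coprime_sym.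
  by rewrite h dvdz_mulr.
rewrite -[q%:R]/((q%:Z)%:~R) -[0 : rat]/((0:int)%:~R) !ler_int => /andP[h1 h2].
have q0' : 0 < q%:Z by rewrite ltz_nat.
have [->|->] := @dvd_bound e q%:Z dv q0' (introT andP (conj h1 h2)).
- by left.
- by right.
Qed.

Lemma int_split (E : rat) (q : nat) : E \is a Num.int -> E <= q%:R - 1 \/ q%:R <= E.
Proof.
move=> /intrP [e ->].
have : (e <= q%:Z - 1) || (q%:Z <= e) by lia.
case/orP => h; [left|right].
- by rewrite -[q%:R]/((q%:Z)%:~R) -[1 : rat]/((1:int)%:~R) -rmorphB ler_int.
- by rewrite -[q%:R]/((q%:Z)%:~R) ler_int.
Qed.

Section S.
Variable n : nat.

Lemma adj (x : wt n) (m : 'I_n) :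
  pairing x (widen_ord (leqnSn n) m) (lift ord0 m) = x (inord m) - x (inord m.+1).
Proof.
rewrite /pairing; congr (x _ - x _); apply: val_inj; rewrite /= inordK //.
  by rewrite ltnS ltnW.
by rewrite ltnS.
Qed.

Lemma tele (x : wt n) (i j : 'I_n.+1) : (i <= j)%N ->
  x i - x j = \sum_(i <= m < j) (x (inord m) - x (inord m.+1)).
Proof.
move=> hij; have := telescope_sumr (fun k => x (inord k)) hij.
rewrite !inord_val => h; rewrite -opprB -h -sumrN.
by apply: eq_bigr => m _; rewrite opprB.
Qed.

Lemma pair_int (x : wt n) :
  (forall m, (m < n)%N -> x (inord m) - x (inord m.+1) \is a Num.int) ->
  forall i j, pairing x i j \is a Num.int.
Proof.
move=> h.
have key : forall i j : 'I_n.+1, (i <= j)%N -> pairing x i j \is a Num.int.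
  move=> i j hij; rewrite /pairing tele // big_nat_cond.
  apply: rpred_sum => m /andP[/andP[_ hm] _]; apply: h.
  by apply: (leq_trans hm); rewrite -ltnS.
move=> i j; case: (leqP i j) => hij; first exact: key.
by rewrite /pairing -opprB rpredN key // ltnW.
Qed.

Lemma addfE (x y : wt n) i : (x + y) i = x i + y i.
Proof. by rewrite ffunE. Qed.

Lemma subfE (x y : wt n) i : (x - y) i = x i - y i.
Proof. by rewrite !ffunE. Qed.

Lemma pair_anti (x : wt n) i j : pairing x j i = - pairing x i j.
Proof. by rewrite /pairing opprB. Qed.

Lemma rho_diff (i j : 'I_n.+1) : rho n i - rho n j = (j : nat)%:R - (i : nat)%:R.
Proof. rewrite /rho !ffunE; ring. Qed.

Lemma PrZ_facts (p : nat) (mu : wt n) : PrZ p mu ->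
  (forall i j, pairing (mu + rho n) i j \is a Num.int) /\
  (forall i j : 'I_n.+1, (i < j)%N -> 0 < pairing (mu + rho n) i j < p%:R).
Proof.
case=> _ [hnat hsum].
have G : forall m, (m < n)%N -> mu (inord m) - mu (inord m.+1) \is a Num.nat.
  by move=> m hm; have := hnat (Ordinal hm); rewrite adj.
split.
  apply: pair_int => m hm; have Gm := G m hm; rewrite !ffunE.
  move: Gm; set a := mu (inord m); set b := mu (inord m.+1) => Gm.
  rewrite !inordK ?ltnS ?(ltnW hm) //.
  have -> : a + (n%:R / 2%:R - m%:R) - (b + (n%:R / 2%:R - (m.+1)%:R)) = (a - b) + 1
    by rewrite -addn1 natrD; ring.
  by apply: rpredD; [by move: Gm; rewrite natrEint => /andP[] | exact: rpred1].
have pos : forall a b, (b <= n)%N -> 0 <= \sum_(a <= m < b) (mu (inord m) - mu (inord m.+1)).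
  move=> a b hb; rewrite big_nat_cond; apply: sumr_ge0 => m /andP[/andP[_ hm] _].
  by apply: natr_ge0; apply: G; apply: leq_trans hm hb.
move=> i j hij.
have hjn : (j <= n)%N by rewrite -ltnS.
have hin : (i <= n)%N by apply: leq_trans (ltnW hij) hjn.
rewrite /pairing !addfE.
have -> : mu i + rho n i - (mu j + rho n j) = (mu i - mu j) + (rho n i - rho n j) by ring.
rewrite rho_diff tele ?(ltnW hij) //.
set S := \sum_(_ <= _ < _) _.
have S0 : 0 <= S by apply: pos.
have ST : S <= \sum_(i < n) pairing mu (widen_ord (leqnSn n) i) (lift ord0 i).
  under eq_bigr => m _ do rewrite adj.
  rewrite -(big_mkord xpredT (fun m => mu (inord m) - mu (inord m.+1))).
  rewrite (@big_cat_nat _ _ _ i 0 n) // (@big_cat_nat _ _ _ j i n) ?(ltnW hij) //=.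
  rewrite addrA -[S in X in X <= _]add0r -[X in X <= _]addr0.
  apply: lerD; [apply: lerD; [exact: pos | exact: lexx] | exact: pos].
rewrite -natrB ?(ltnW hij) //.
have h1 : (1 <= j - i)%N by lia.
have h2 : (j - i <= n)%N by lia.
apply/andP; split.
  apply: (lt_le_trans _ (lerD S0 (lexx _))); rewrite add0r ltr0n; exact: h1.
apply: (le_lt_trans (lerD (le_trans ST hsum) (_ : (j - i)%:R <= n%:R))).
  by rewrite ler_nat.
lra.
Qed.

Lemma Pvee_int (eta : wt n) : in_Pvee eta -> forall i j, pairing eta i j \is a Num.int.
Proof.
case=> _ h; apply: pair_int => m hm; by have := h (Ordinal hm); rewrite adj.
Qed.

Lemma dot_rho (s : {perm 'I_n.+1}) (x : wt n) k :
  (dot s x + rho n) k = (x + rho n) ((s^-1)%g k).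
Proof. by rewrite /dot subrK /wact ffunE. Qed.

Lemma pair_dot (s : {perm 'I_n.+1}) (x : wt n) k l :
  pairing (dot s x + rho n) k l = pairing (x + rho n) ((s^-1)%g k) ((s^-1)%g l).
Proof. by rewrite /pairing !dot_rho. Qed.

Lemma pair_z (m0 eta : wt n) c i j :
  pairing ([ffun i => m0 i - c * eta i] + rho n) i j
  = pairing (m0 + rho n) i j - c * pairing eta i j.
Proof. rewrite /pairing !addfE !ffunE; ring. Qed.

Lemma dot_comp (s w : {perm 'I_n.+1}) (x : wt n) :
  dot s (dot w x) = dot (w * s)%g x.
Proof.
rewrite {1}/dot /dot subrK; congr (_ - _); apply/ffunP => i.
by rewrite !ffunE invMg permM.
Qed.

Lemma Pr_pos (p q : nat) (lam : wt n) : (0 < q)%N -> coprime p q -> Pr p q lam ->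
  forall k l : 'I_n.+1, (k < l)%N -> pairing (lam + rho n) k l \is a Num.int ->
  0 < pairing (lam + rho n) k l.
Proof.
move=> q0 cpq [m0 [w0 [eta [hZ hP hC ->]]]] k l kl.
have [Dint Dbd] := PrZ_facts _ _ hZ.
have Eint := Pvee_int _ hP.
rewrite pair_dot pair_z.
have hk : k = w0 ((w0^-1)%g k) by rewrite permKV.
have hl : l = w0 ((w0^-1)%g l) by rewrite permKV.
move: kl; rewrite hk hl permK permK.
move: ((w0^-1)%g k) ((w0^-1)%g l) => i j {hk hl k l} kl hint.
have cE : p%:R / q%:R * pairing eta i j \is a Num.int.
  have -> : p%:R / q%:R * pairing eta i j = pairing (m0 + rho n) i j -
     (pairing (m0 + rho n) i j - p%:R / q%:R * pairing eta i j) by ring.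
  by rewrite rpredB.
case: (ltngtP i j) => [hij|hji|heq].
- have := (hC (i, j) hij).1 kl => hb.
  have hb' : 0 <= pairing eta i j <= q%:R by move: hb; case/andP => h1 h2; rewrite h1 /=; lra.
  have [E0|Eq] := qdiv _ _ _ q0 cpq (Eint i j) cE hb'.
  + by rewrite E0 mulr0 subr0; case/andP: (Dbd i j hij).
  + by move: hb; rewrite Eq; lra.
- have := (hC (j, i) hji).2 kl => hb.
  have cE' : p%:R / q%:R * pairing eta j i \is a Num.int by rewrite pair_anti mulrN rpredN.
  have hb' : 0 <= pairing eta j i <= q%:R by move: hb; case/andP => h1 h2; rewrite h2 andbT; lra.
  have [E0|Eq] := qdiv _ _ _ q0 cpq (Eint j i) cE' hb'.
  + by move: hb; rewrite E0; lra.
  + have := Dbd j i hji; rewrite (pair_anti (m0 + rho n) j i) (pair_anti eta j i) in Eq *.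
    move=> hD.
    have qn0 : (q%:R : rat) != 0 by rewrite pnatr_eq0 -lt0n.
    rewrite Eq mulrN opprK divfK //.
    lra.
- by move: kl; rewrite (val_inj heq) ltnn.
Qed.
End S.

Theorem mainTheorem7 (n p q : nat) (lam mu : wt n) :
  (1 <= n)%N -> (0 < q)%N -> coprime p q -> (n.+1 <= p)%N ->
  Pr p q lam ->
  (exists w : {perm 'I_n.+1}, mu = dot w lam) ->
  (Pr p q mu <-> exists2 w : {perm 'I_n.+1}, Wlam lam w & mu = dot (w^-1)%g lam).
Proof.
move=> n1 q0 cpq pn hlam [s hs]; split.
- move=> hmu; exists (s^-1)%g; last by rewrite invgK.
  move=> [a1 a2] pa [[b1 b2] nb hb]; split => // -[_ hint].
  move: hb; rewrite /root_act /= => -[e1 e2].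
  have pos1 := Pr_pos _ _ _ _ q0 cpq hlam a1 a2 pa hint.
  have h2 : pairing (mu + rho n) b2 b1 = - pairing (lam + rho n) a1 a2.
    by rewrite hs pair_dot e1 e2 pair_anti.
  have pos2 : 0 < pairing (mu + rho n) b2 b1.
    by apply: (Pr_pos _ _ _ _ q0 cpq hmu b2 b1 nb); rewrite h2 rpredN.
  by move: pos2; rewrite h2; lra.
- case=> w hW ->; case: (hlam) => m0 [w0 [eta [hZ hP hC Elam]]].
  exists m0, (w0 * w^-1)%g, eta; split => //; last by rewrite Elam dot_comp.
  move=> [i j] /= pij.
  have [Dint Dbd] := PrZ_facts _ _ _ hZ.
  have Eint := Pvee_int _ _ hP.
  have nu : pairing (lam + rho n) (w0 i) (w0 j) =
      pairing (m0 + rho n) i j - p%:R / q%:R * pairing eta i j.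
    by rewrite Elam pair_dot !permK pair_z.
  have hC' := hC (i, j) pij.
  rewrite /root_act /pos_root /neg_root /= in hC' *; rewrite !permM.
  have wne : w0 i != w0 j.
    by apply/eqP => /perm_inj h; move: pij; rewrite /pos_root /= h ltnn.
  have hD := Dbd i j pij.
  have qn0 : (q%:R : rat) != 0 by rewrite pnatr_eq0 -lt0n.
  split => hpos.
  + case: (ltngtP (w0 i) (w0 j)) => [kl|lk|keq]; first exact: hC'.1 kl; last first.
      by move: wne; rewrite (val_inj keq) eqxx.
    have hb := hC'.2 lk.
    have [h|h] := int_split _ q (Eint i j).
      by case/andP: hb => h1 _; rewrite h andbT; lra.
    have Eq : pairing eta i j = q%:R by apply/eqP; rewrite eq_le h andbT; case/andP: hb.
    exfalso.
    have hex : exists2 b, neg_root b & root_act w b = (w0 j, w0 i).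
      by exists ((w^-1)%g (w0 j), (w^-1)%g (w0 i)) => //; rewrite /root_act /= !permKV.
    have [_ hnot] := hW (w0 j, w0 i) lk hex.
    apply: hnot; split; first by rewrite /is_root /= eq_sym.
    rewrite /= pair_anti nu Eq divfK // rpredN rpredB //.
    exact: rpred_nat.
  + case: (ltngtP (w0 i) (w0 j)) => [kl|lk|keq]; last first.
      by move: wne; rewrite (val_inj keq) eqxx.
      exact: hC'.2 lk.
    have hb := hC'.1 kl.
    have [h|h] := int_split _ 1 (Eint i j).
      have E0 : pairing eta i j = 0.
        by apply/eqP; rewrite eq_le; case/andP: hb => -> _; move: h; rewrite subrr => ->.
      exfalso.
      have hex : exists2 b, neg_root b & root_act w b = (w0 i, w0 j).
        by exists ((w^-1)%g (w0 i), (w^-1)%g (w0 j)) => //; rewrite /root_act /= !permKV.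
      have [_ hnot] := hW (w0 i, w0 j) kl hex.
      apply: hnot; split; first by [].
      by rewrite /= nu E0 mulr0 subr0.
    by case/andP: hb => _ h2; rewrite h /=; lra.
Qed.
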